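(* Let $k\ge1$ be an integer and $\alpha>k$ real. Then $$\sum_{n=1}^\infty\frac{H_{n+\alpha}}{n\binom{n+k}{k}}=\sum_{j=1}^k(-1)^{j+1}\binom kj\Bigg\{H_\alpha^2+H_\alpha^{(2)}-H_{\alpha-j}^2-H_{\alpha-j}^{(2)}-(j-\alpha)\sum_{i=1}^j\frac{H_{\alpha+i-j}}{i(\alpha+i-j)}\Bigg\},$$ $$\sum_{n=1}^\infty\frac{H^{(2)}_{n+\alpha}}{n\binom{n+k}{k}}=\sum_{j=1}^k(-1)^{j+1}\binom kj\Bigg\{2H_\alpha^{(3)}+H_{\alpha-j}\zeta(2)+2H_\alpha H_\alpha^{(2)}-2H_{\alpha-j}^{(3)}-H_\alpha\zeta(2)-2H_{\alpha-j}H_{\alpha-j}^{(2)}-(j-\alpha)\sum_{i=1}^j\frac{H^{(2)}_{\alpha+i-j}}{i(\alpha+i-j)}-\sum_{i=1}^j\frac{H_{\alpha+i-j}}{(\alpha+i-j)^2}\Bigg\},$$ $$\sum_{n=1}^\infty\frac{H^2_{n+\alpha}}{n\binom{n+k}{k}}=\sum_{j=1}^k(-1)^{j+1}\binom kj\Bigg\{H_\alpha^3+H_\alpha H_\alpha^{(2)}+H_\alpha\zeta(2)-H_{\alpha-j}^3-H_{\alpha-j}H_{\alpha-j}^{(2)}-H_{\alpha-j}\zeta(2)+\sum_{i=1}^j\frac{H_{\alpha+i-j}}{(\alpha+i-j)^2}-(j-\alpha)\sum_{i=1}^j\frac{H^2_{\alpha+i-j}}{i(\alpha+i-j)}\Bi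gg\}.$$
   Context: Shifted harmonic numbers: for a real $\alpha$ that is not a negative integer, $H_\alpha := \sum_{k=1}^\infty\left(\frac1k-\frac1{k+\alpha}\right)$ and, for integers $m\ge 2$, $H_\alpha^{(m)} := \sum_{k=1}^\infty\left(\frac1{k^m}-\frac1{(k+\alpha)^m}\right)=\zeta(m)-\zeta(m,\alpha+1)$, where $\zeta$ is the Riemann zeta function and $\zeta(s,\alpha+1)=\sum_{n=1}^\infty (n+\alpha)^{-s}$ is the Hurwitz zeta function. Powers such as $H_\alpha^2$ mean $(H_\alpha)^2$. *)

(* Defs.v *)
From Stdlib Require Import Reals Lra Lia ClassicalEpsilon.
Open Scope R_scope.

(* The limit of a real sequence (chosen classically; meaningful when it converges). *)
Definition lim_seq (u : nat -> R) : R :=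
  epsilon (inhabits 0) (fun l => Un_cv u l).

Fixpoint sum1 (k : nat) (f : nat -> R) : R :=
  match k with
  | O => 0
  | S k' => sum1 k' f + f (S k')
  end.

Definition Hm (m : nat) (a : R) : R :=
  lim_seq (fun N => sum1 N (fun k => / (INR k) ^ m - / (INR k + a) ^ m)).

Definition H (a : R) : R := Hm 1 a.

Definition zeta (m : nat) : R := lim_seq (fun N => sum1 N (fun k => / (INR k) ^ m)).

(* Main.v *)
Require Import Defs.
From Stdlib Require Import Reals Lra Lia ClassicalEpsilon Factorial.
From Coquelicot Require Import Rcomplements Rbar Lim_seq.
Open Scope R_scope.

Definition ser (f : nat -> R) (l : R) := is_lim_seq (fun N => sum1 N f) l.

Lemma lim_seq_spec u (l : R) : is_lim_seq u l -> lim_seq u = l.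
Proof.
  intro H. unfold lim_seq.
  assert (E : exists l, Un_cv u l) by (exists l; apply is_lim_seq_Reals; exact H).
  pose proof (epsilon_spec (inhabits 0) (fun l => Un_cv u l) E) as Hs.
  apply (UL_sequence u); [exact Hs| apply is_lim_seq_Reals; exact H].
Qed.

Lemma sum1_ext N f g : (forall i, (1 <= i <= N)%nat -> f i = g i) -> sum1 N f = sum1 N g.
Proof.
  induction N; intros H; simpl; auto.
  rewrite IHN; [rewrite H; auto; lia| intros; apply H; lia].
Qed.

Lemma sum1_plus N f g : sum1 N (fun i => f i + g i) = sum1 N f + sum1 N g.
Proof. induction N; simpl; [ring| rewrite IHN; ring]. Qed.
Lemma sum1_minus N f g : sum1 N (fun i => f i - g i) = sum1 N f - sum1 N g.
Proof. induction N; simpl; [ring| rewrite IHN; ring]. Qed.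
Lemma sum1_scal N c f : sum1 N (fun i => c * f i) = c * sum1 N f.
Proof. induction N; simpl; [ring| rewrite IHN; ring]. Qed.
Lemma sum1_zero N : sum1 N (fun _ => 0) = 0.
Proof. induction N; simpl; [ring| rewrite IHN; ring]. Qed.
Lemma sum1_shift N f : sum1 (S N) f = f 1%nat + sum1 N (fun i => f (S i)).
Proof. induction N; simpl in *; [ring| rewrite IHN; ring]. Qed.
Lemma sum1_tele N g : sum1 N (fun n => g (pred n) - g n) = g 0%nat - g N.
Proof. induction N; simpl in *; [ring| rewrite IHN; ring]. Qed.
Lemma sum1_le N f g : (forall i, (1 <= i <= N)%nat -> f i <= g i) -> sum1 N f <= sum1 N g.
Proof.
  induction N; intros H; simpl; [lra|].
  assert (sum1 N f <= sum1 N g) by (apply IHN; intros; apply H; lia).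
  assert (f (S N) <= g (S N)) by (apply H; lia). lra.
Qed.
Lemma sum1_nonneg N f : (forall i, (1 <= i <= N)%nat -> 0 <= f i) -> 0 <= sum1 N f.
Proof. intros H. rewrite <- (sum1_zero N). apply sum1_le; auto. Qed.
Lemma sum1_abs N f : Rabs (sum1 N f) <= sum1 N (fun i => Rabs (f i)).
Proof.
  induction N; simpl. rewrite Rabs_R0; lra.
  eapply Rle_trans; [apply Rabs_triang| lra].
Qed.
Lemma sum1_swap K N (f : nat -> nat -> R) :
  sum1 N (fun n => sum1 K (fun j => f j n)) = sum1 K (fun j => sum1 N (fun n => f j n)).
Proof.
  induction N; simpl. now rewrite sum1_zero.
  rewrite IHN. rewrite <- sum1_plus. reflexivity.
Qed.
Lemma sum1_mono N f : (forall i, (1 <= i)%nat -> 0 <= f i) -> forall M, (N <= M)%nat -> sum1 N f <= sum1 M f.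
Proof.
  intros H M HM. induction HM; [lra| simpl; specialize (H (S m) ltac:(lia)); lra].
Qed.

Lemma ser_ext f g l : (forall n, (1 <= n)%nat -> f n = g n) -> ser f l -> ser g l.
Proof.
  intros H S. unfold ser. eapply is_lim_seq_ext; [|exact S].
  intro N. apply sum1_ext. intros; apply H; lia.
Qed.
Lemma ser_plus f g l m : ser f l -> ser g m -> ser (fun n => f n + g n) (l + m).
Proof.
  intros A B. unfold ser. eapply is_lim_seq_ext; [|apply (is_lim_seq_plus' _ _ _ _ A B)].
  intros; simpl; now rewrite sum1_plus.
Qed.
Lemma ser_minus f g l m : ser f l -> ser g m -> ser (fun n => f n - g n) (l - m).
Proof.
  intros A B. unfold ser. eapply is_lim_seq_ext; [|apply (is_lim_seq_minus' _ _ _ _ A B)].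
  intros; simpl; now rewrite sum1_minus.
Qed.
Lemma ser_scal c f l : ser f l -> ser (fun n => c * f n) (c * l).
Proof.
  intros A. unfold ser. eapply is_lim_seq_ext; [|apply (is_lim_seq_scal_l _ c _ A)].
  intros; simpl; now rewrite sum1_scal.
Qed.
Lemma ser_zero : ser (fun _ => 0) 0.
Proof.
  unfold ser. eapply is_lim_seq_ext; [|apply is_lim_seq_const]. intro; simpl; now rewrite sum1_zero.
Qed.
Lemma ser_unique f l m : ser f l -> ser f m -> l = m.
Proof.
  intros A B. apply is_lim_seq_unique in A. apply is_lim_seq_unique in B.
  rewrite A in B. now injection B.
Qed.

Lemma ser_pos_bound f B : (forall n, 0 <= f n) -> (forall N, sum1 N f <= B) -> exists l, ser f l.
Proof.
  intros H1 H2.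
  assert (E : ex_finite_lim_seq (fun N => sum1 N f)).
  { apply (ex_finite_lim_seq_incr _ B); auto. intro n; simpl; specialize (H1 (S n)); lra. }
  destruct E as [l Hl]. exists l. exact Hl.
Qed.

Lemma ser_le_lim f l N : (forall n, (1 <= n)%nat -> 0 <= f n) -> ser f l -> sum1 N f <= l.
Proof.
  intros H S.
  assert (R: Rbar_le (sum1 N f) l).
  { apply (is_lim_seq_le (fun _ => sum1 N f) (fun M => sum1 (N + M) f)).
    - intro M. apply sum1_mono; auto; lia.
    - apply is_lim_seq_const.
    - unfold ser in S. apply (is_lim_seq_incr_n _ N) in S. eapply is_lim_seq_ext; [|exact S].
      intro; simpl; f_equal; apply Nat.add_comm. }
  exact R.
Qed.

Lemma lim_inv_n b : 0 < b -> is_lim_seq (fun n => / (INR n + b)) 0.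
Proof.
  intro hb.
  assert (A : is_lim_seq (fun n => INR n + b) p_infty).
  { eapply is_lim_seq_plus; [apply is_lim_seq_INR| apply is_lim_seq_const| reflexivity]. }
  apply (is_lim_seq_inv _ _) in A; [|discriminate]. exact A.
Qed.

Lemma lim_scal0 u K : is_lim_seq u 0 -> is_lim_seq (fun n => K * u n) 0.
Proof.
  intro A. pose proof (is_lim_seq_mult' (fun _ => K) u K 0 (is_lim_seq_const K) A) as B.
  rewrite Rmult_0_r in B. exact B.
Qed.

Lemma lim_bound u K b : 0 < b -> (forall n, Rabs (u n) <= K * / (INR n + b)) -> is_lim_seq u 0.
Proof.
  intros hb H.
  apply (is_lim_seq_le_le (fun n => - (K * / (INR n + b))) u (fun n => K * / (INR n + b))).
  - intro n. specialize (H n). apply Rabs_le_between in H. lra.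
  - pose proof (lim_scal0 _ (-K) (lim_inv_n b hb)) as B. eapply is_lim_seq_ext; [|exact B].
    intro; simpl; ring.
  - exact (lim_scal0 _ K (lim_inv_n b hb)).
Qed.
Lemma sum1_S N f : sum1 (S N) f = sum1 N f + f (S N).
Proof. reflexivity. Qed.

Lemma INR_S_pos n : 0 < INR (S n).
Proof. apply lt_0_INR; lia. Qed.
Lemma INR_ge1 n : (1 <= n)%nat -> 1 <= INR n.
Proof. intro; replace 1 with (INR 1) by reflexivity; apply le_INR; lia. Qed.

Lemma inv_sq_sum N : (1 <= N)%nat -> sum1 N (fun k => / INR k ^ 2) <= 2 - / INR N.
Proof.
  induction N; intro H; [lia|].
  destruct N. simpl. lra.
  simpl sum1 at 1. change (sum1 (S N) (fun k => / INR k ^ 2) + / INR (S (S N)) ^ 2 <= 2 - / INR (S (S N))).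
  assert (IH := IHN ltac:(lia)).
  assert (h1 := INR_S_pos N). rewrite (S_INR (S N)).
  assert (/ (INR (S N) + 1) ^ 2 <= / INR (S N) - / (INR (S N) + 1)).
  { replace (/ INR (S N) - / (INR (S N) + 1)) with (/ (INR (S N) * (INR (S N) + 1))) by (field; lra).
    apply Rinv_le_contravar. apply Rmult_lt_0_compat; lra. replace ((INR (S N) + 1) ^ 2) with ((INR (S N) + 1) * (INR (S N) + 1)) by ring; apply Rmult_le_compat_r; lra. }
  lra.
Qed.

Lemma inv_sq_sum2 N : sum1 N (fun k => / INR k ^ 2) <= 2.
Proof.
  destruct N. simpl; lra.
  pose proof (inv_sq_sum (S N) ltac:(lia)). pose proof (INR_S_pos N).
  assert (0 < / INR (S N)) by (apply Rinv_0_lt_compat; lra). lra.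
Qed.

Definition Hterm m a (k : nat) := / INR k ^ m - / (INR k + a) ^ m.

Lemma Hterm_bounds m a k : 0 <= a -> (1 <= m)%nat -> (1 <= k)%nat ->
  0 <= Hterm m a k <= (a + 1) * / INR k ^ 2.
Proof.
  intros ha hm hk. unfold Hterm. pose proof (INR_ge1 k hk) as h1.
  assert (P1 : 0 < INR k ^ m) by (apply pow_lt; lra).
  assert (P2 : INR k ^ m <= (INR k + a) ^ m) by (apply pow_incr; lra).
  split.
  - assert (/ (INR k + a) ^ m <= / INR k ^ m) by (apply Rinv_le_contravar; lra). lra.
  - destruct m as [|[|m]]; [lia| |].
    + simpl. rewrite !Rmult_1_r.
      replace (/ INR k - / (INR k + a)) with (a * / (INR k * (INR k + a))) by (field; lra).
      rewrite Rmult_plus_distr_r.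
      assert (a * / (INR k * (INR k + a)) <= a * / (INR k * INR k)).
      { apply Rmult_le_compat_l; auto. apply Rinv_le_contravar; [apply Rmult_lt_0_compat; lra| apply Rmult_le_compat_l; lra]. }
      assert (0 < / (INR k * INR k)) by (apply Rinv_0_lt_compat; apply Rmult_lt_0_compat; lra). lra.
    + assert (P3 : 0 < (INR k + a) ^ S (S m)) by (apply pow_lt; lra).
      assert (/ INR k ^ S (S m) <= / INR k ^ 2).
      { apply Rinv_le_contravar. simpl; nra. apply Rle_pow; auto; lia. }
      assert (0 < / (INR k + a) ^ S (S m)) by (apply Rinv_0_lt_compat; lra).
      assert (0 <= a * / INR k ^ 2). { apply Rmult_le_pos; auto. left; apply Rinv_0_lt_compat; simpl; nra. }
      lra.
Qed.

Lemma Hm_ser m a : 0 <= a -> (1 <= m)%nat -> ser (Hterm m a) (Hm m a).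
Proof.
  intros ha hm.
  destruct (ser_pos_bound (fun k => match k with O => 0 | _ => Hterm m a k end) ((a+1)*2)) as [l Hl].
  - intros [|n]; [lra| apply Hterm_bounds; auto; lia].
  - intro N. eapply Rle_trans; [apply (sum1_le _ _ (fun k => (a+1) * / INR k ^ 2))|].
    + intros [|i] Hi; [lia|]. apply Hterm_bounds; auto; lia.
    + rewrite sum1_scal. apply Rmult_le_compat_l; [lra| apply inv_sq_sum2].
  - assert (S : ser (Hterm m a) l) by (eapply ser_ext; [|exact Hl]; intros [|n] Hn; [lia|reflexivity]).
    unfold Hm. rewrite (lim_seq_spec _ l); auto.
Qed.

Lemma zeta_ser : ser (fun k => / INR k ^ 2) (zeta 2).
Proof.
  destruct (ser_pos_bound (fun k => match k with O => 0 | _ => / INR k ^ 2 end) 2) as [l Hl].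
  - intros [|n]; [lra|]. left; apply Rinv_0_lt_compat; apply pow_lt; apply INR_S_pos.
  - intro N. erewrite sum1_ext; [apply inv_sq_sum2|]. intros [|i] Hi; [lia|reflexivity].
  - assert (S : ser (fun k => / INR k ^ 2) l) by (eapply ser_ext; [|exact Hl]; intros [|n] Hn; [lia|reflexivity]).
    unfold zeta. rewrite (lim_seq_spec _ l); auto.
Qed.

Lemma Hm_nonneg m a : 0 <= a -> (1 <= m)%nat -> 0 <= Hm m a.
Proof.
  intros ha hm. pose proof (Hm_ser m a ha hm) as S.
  assert (R : Rbar_le 0 (Hm m a)).
  { apply (is_lim_seq_le (fun _ => 0) (fun N => sum1 N (Hterm m a))); [|apply is_lim_seq_const|exact S].
    intro N. apply sum1_nonneg. intros; apply Hterm_bounds; auto; lia. }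
  exact R.
Qed.

Lemma Hm2_le a : 0 <= a -> Hm 2 a <= 2.
Proof.
  intros ha. pose proof (Hm_ser 2 a ha ltac:(lia)) as S.
  assert (R : Rbar_le (Hm 2 a) 2).
  { apply (is_lim_seq_le (fun N => sum1 N (Hterm 2 a)) (fun _ => 2)); [|exact S|apply is_lim_seq_const].
    intro N. eapply Rle_trans; [|apply (inv_sq_sum2 N)]. apply sum1_le. intros i Hi.
    unfold Hterm. assert (0 < (INR i + a)^2). { pose proof (INR_ge1 i ltac:(lia)). apply pow_lt; lra. }
    assert (0 < / (INR i + a)^2) by (apply Rinv_0_lt_compat; auto). lra. }
  exact R.
Qed.

Lemma Hm_zero m : Hm m 0 = 0.
Proof.
  unfold Hm. apply lim_seq_spec. eapply is_lim_seq_ext; [|apply is_lim_seq_const].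
  intro N. transitivity (sum1 N (fun _ => 0)); [symmetry; apply sum1_zero| apply sum1_ext]. intros; rewrite Rplus_0_r; ring.
Qed.

Lemma Hm_shift1 m x : 0 <= x -> (1 <= m)%nat -> Hm m (x + 1) = Hm m x + / (x + 1) ^ m.
Proof.
  intros hx hm.
  pose proof (Hm_ser m x hx hm) as S0.
  set (g := fun n : nat => / (INR n + x + 1) ^ m).
  assert (T : ser (fun k => g (pred k) - g k) (/ (x+1) ^ m)).
  { unfold ser. eapply is_lim_seq_ext.
    - intro N. symmetry. apply sum1_tele.
    - replace (/ (x + 1) ^ m) with (g 0%nat - 0) by (unfold g; simpl INR; rewrite Rminus_0_r, Rplus_0_l; reflexivity).
      apply is_lim_seq_minus'; [apply is_lim_seq_const|].
      apply (lim_bound _ 1 (x+1)); [lra|]. intro n. unfold g.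
      assert (h : 1 <= INR n + x + 1) by (pose proof (pos_INR n); lra).
      assert (hp : INR n + x + 1 <= (INR n + x + 1) ^ m).
      { destruct m; [lia|]. rewrite <- (pow_1 (INR n + x + 1)) at 1. apply Rle_pow; auto; lia. }
      rewrite Rabs_pos_eq; [|left; apply Rinv_0_lt_compat; apply pow_lt; lra].
      rewrite Rmult_1_l. replace (INR n + (x+1)) with (INR n + x + 1) by ring.
      apply Rinv_le_contravar; lra. }
  pose proof (ser_plus _ _ _ _ S0 T) as S1.
  assert (S2 : ser (Hterm m (x+1)) (Hm m (x+1))) by (apply Hm_ser; auto; lra).
  apply (ser_unique (Hterm m (x+1))); auto.
  eapply ser_ext; [|exact S1]. intros [|n] Hn; [lia|]. unfold Hterm, g. simpl pred.
  rewrite S_INR. replace (INR n + 1 + (x + 1)) with (INR n + 1 + x + 1) by ring.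
  replace (INR n + x + 1) with (INR n + 1 + x) by ring. ring.
Qed.

Lemma Hm_shift m x p : 0 <= x -> (1 <= m)%nat ->
  Hm m (x + INR p) = Hm m x + sum1 p (fun i => / (x + INR i) ^ m).
Proof.
  intros hx hm. induction p.
  - simpl. rewrite Rplus_0_r; ring.
  - rewrite sum1_S, S_INR. replace (x + (INR p + 1)) with ((x + INR p) + 1) by ring.
    rewrite Hm_shift1; auto. rewrite IHp. ring.
    pose proof (pos_INR p); lra.
Qed.

Lemma H_shift1 x : 0 <= x -> H (x + 1) = H x + / (x + 1).
Proof. intro hx. unfold H. rewrite Hm_shift1; auto. simpl. rewrite Rmult_1_r. reflexivity. Qed.

Lemma H_shift x p : 0 <= x -> H (x + INR p) = H x + sum1 p (fun i => / (x + INR i)).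
Proof.
  intro hx. unfold H. rewrite Hm_shift; auto. f_equal. apply sum1_ext. intros; simpl; rewrite Rmult_1_r; auto.
Qed.

Lemma H_nonneg x : 0 <= x -> 0 <= H x.
Proof. intro; apply Hm_nonneg; auto. Qed.

Lemma H_zero : H 0 = 0.
Proof. apply Hm_zero. Qed.

Lemma Hm_down m a : 1 <= a -> (1 <= m)%nat -> Hm m (a - 1) = Hm m a - / a ^ m.
Proof.
  intros ha hm. pose proof (Hm_shift1 m (a-1) ltac:(lra) hm) as E.
  replace (a - 1 + 1) with a in E by ring. lra.
Qed.
Lemma H_down a : 1 <= a -> H (a - 1) = H a - / a.
Proof. intro ha. unfold H. rewrite Hm_down; auto. simpl; rewrite Rmult_1_r; auto. Qed.

Lemma ser_C1 a : 0 < a -> ser (fun n => / (INR n * (INR n + a))) (H a / a).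
Proof.
  intro ha. pose proof (ser_scal (/a) _ _ (Hm_ser 1 a ltac:(lra) ltac:(lia))) as S.
  unfold H. replace (Hm 1 a / a) with (/a * Hm 1 a) by (unfold Rdiv; ring).
  eapply ser_ext; [|exact S]. intros n hn. pose proof (INR_ge1 n hn). unfold Hterm. simpl. field. lra.
Qed.

Lemma ser_C2 a : 0 <= a -> ser (fun n => / (INR n + a) ^ 2) (zeta 2 - Hm 2 a).
Proof.
  intro ha. pose proof (ser_minus _ _ _ _ zeta_ser (Hm_ser 2 a ha ltac:(lia))) as S.
  eapply ser_ext; [|exact S]. intros n hn. unfold Hterm. ring.
Qed.

Lemma ser_C3 a : 0 < a ->
  ser (fun n => / (INR n * (INR n + a) ^ 2)) ((H a / a - (zeta 2 - Hm 2 a)) / a).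
Proof.
  intro ha. pose proof (ser_scal (/a) _ _ (ser_minus _ _ _ _ (ser_C1 a ha) (ser_C2 a ltac:(lra)))) as S.
  replace ((H a / a - (zeta 2 - Hm 2 a)) / a) with (/a * (H a / a - (zeta 2 - Hm 2 a))) by (unfold Rdiv; ring).
  eapply ser_ext; [|exact S]. intros n hn. pose proof (INR_ge1 n hn). cbv beta. field. lra.
Qed.

Definition hs N := sum1 N (fun i => / INR i).

Lemma ln_le_sub1 y : 0 < y -> ln y <= y - 1.
Proof.
  intro hy. destruct (Req_dec (ln y) 0) as [E|E].
  - assert (hx1 : y = 1). { rewrite <- (exp_ln y hy), E. apply exp_0. } lra.
  - pose proof (exp_ineq1 _ E) as L. rewrite exp_ln in L; auto. lra.
Qed.

Lemma hs_S_ln N : hs (S N) <= 1 + ln (INR (S N)).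
Proof.
  induction N.
  - unfold hs. simpl. rewrite ln_1. lra.
  - unfold hs in *. rewrite sum1_S.
    assert (h1 := INR_S_pos N). rewrite (S_INR (S N)).
    assert (L : / (INR (S N) + 1) <= ln (INR (S N) + 1) - ln (INR (S N))).
    { pose proof (ln_le_sub1 (INR (S N) / (INR (S N) + 1)) ltac:(apply Rdiv_lt_0_compat; lra)) as L.
      rewrite ln_div in L; try lra.
      replace (INR (S N) / (INR (S N) + 1) - 1) with (- / (INR (S N) + 1)) in L by (field; lra). lra. }
    lra.
Qed.

Lemma hs_ln N : hs N <= 1 + ln (INR N + 1).
Proof.
  pose proof (hs_S_ln N) as L. rewrite S_INR in L.
  assert (hx2 : hs N <= hs (S N)). { unfold hs. rewrite sum1_S. pose proof (INR_S_pos N).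
    assert (hx3 : 0 < / INR (S N)) by (apply Rinv_0_lt_compat; lra). lra. }
  lra.
Qed.

Lemma ln_le_sqrt4 y : 0 < y -> ln y <= 4 * sqrt (sqrt y).
Proof.
  intro hy. set (q := sqrt (sqrt y)).
  assert (hs1 : 0 < sqrt y) by (apply sqrt_lt_R0; auto).
  assert (hq : 0 < q) by (apply sqrt_lt_R0; auto).
  assert (E : y = q ^ 4).
  { unfold q. replace (sqrt (sqrt y) ^ 4) with ((sqrt (sqrt y) * sqrt (sqrt y)) * (sqrt (sqrt y) * sqrt (sqrt y))) by ring.
    rewrite sqrt_sqrt; [|lra]. rewrite sqrt_sqrt; lra. }
  rewrite E. rewrite ln_pow; auto. pose proof (ln_le_sub1 q hq). simpl INR. lra.
Qed.

Lemma H_le_hs a N : 0 <= a -> H (INR N + a) <= H a + hs N.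
Proof.
  intro ha. rewrite Rplus_comm. rewrite H_shift; auto.
  apply Rplus_le_compat_l. apply sum1_le. intros i hi. pose proof (INR_ge1 i ltac:(lia)).
  apply Rinv_le_contravar; lra.
Qed.

Lemma lim_inv_sqrt : is_lim_seq (fun N => / sqrt (INR N + 1)) 0.
Proof.
  replace (Finite 0) with (Rbar_inv p_infty) by reflexivity.
  apply is_lim_seq_inv; [|discriminate].
  apply is_lim_seq_spec. intro M.
  destruct (nfloor_ex (Rmax 0 M ^ 2) ltac:(apply pow_le; apply Rmax_l)) as [N0 HN0].
  exists N0. intros n hn. apply le_INR in hn.
  assert (h0 : Rmax 0 M ^ 2 < INR n + 1) by lra.
  assert (hx4 : Rmax 0 M < sqrt (INR n + 1)).
  { rewrite <- (sqrt_pow2 (Rmax 0 M)); [|apply Rmax_l]. apply sqrt_lt_1_alt. split; [apply pow_le, Rmax_l|lra]. }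
  pose proof (Rmax_r 0 M). lra.
Qed.

Lemma lim_H2 a b : 0 <= a -> 1 <= b -> is_lim_seq (fun N => H (INR N + a) ^ 2 / (INR N + b)) 0.
Proof.
  intros ha hb. set (K := H a + 1).
  assert (HK : 0 <= K) by (pose proof (H_nonneg a ha); unfold K; lra).
  apply (is_lim_seq_le_le (fun _ => 0) _ (fun N => 2 * K^2 * / (INR N + b) + 32 * / sqrt (INR N + 1))).
  - intro N. pose proof (pos_INR N) as hN.
    assert (hp : 0 < INR N + 1) by lra.
    assert (h0 : 0 <= H (INR N + a)) by (apply H_nonneg; lra).
    assert (h1 : H (INR N + a) <= K + 4 * sqrt (sqrt (INR N + 1))).
    { pose proof (H_le_hs a N ha). pose proof (hs_ln N). pose proof (ln_le_sqrt4 _ hp). unfold K; lra. }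
    set (s := sqrt (INR N + 1)) in *.
    assert (hs0 : 0 < s) by (apply sqrt_lt_R0; lra).
    assert (hss : s * s = INR N + 1) by (apply sqrt_sqrt; lra).
    assert (hq0 : 0 <= sqrt s) by apply sqrt_pos.
    assert (hqq : sqrt s * sqrt s = s) by (apply sqrt_sqrt; lra).
    split. { apply Rmult_le_pos; [apply pow_le; auto| left; apply Rinv_0_lt_compat; lra]. }
    assert (h2 : H (INR N + a) ^ 2 <= 2 * K ^ 2 + 32 * s).
    { assert (hx5 : H (INR N + a) ^ 2 <= (K + 4 * sqrt s) ^ 2) by (apply pow_incr; lra).
      assert (hx6 : 0 <= (K - 4 * sqrt s)^2) by (apply pow2_ge_0). nra. }
    assert (h3 : s <= INR N + b). { destruct (Rle_dec 1 s). assert (hx7 : s*1 <= s*s) by (apply Rmult_le_compat_l; lra). lra. lra. }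
    unfold Rdiv. apply Rle_trans with ((2 * K ^ 2 + 32 * s) * / (INR N + b)).
    + apply Rmult_le_compat_r with (r := / (INR N + b)); [left; apply Rinv_0_lt_compat; lra| exact h2].
    + rewrite Rmult_plus_distr_r. apply Rplus_le_compat_l. rewrite Rmult_assoc. apply Rmult_le_compat_l; [lra|].
      apply (Rmult_le_reg_l (INR N + b)); [lra|]. field_simplify; [|lra|lra].
      apply (Rmult_le_reg_l s); [lra|]. field_simplify; lra.
  - apply is_lim_seq_const.
  - replace 0 with (2 * K ^ 2 * 0 + 32 * 0) by ring.
    apply is_lim_seq_plus'; apply is_lim_seq_mult'; try apply is_lim_seq_const.
    apply lim_inv_n; lra. apply lim_inv_sqrt.
Qed.

Lemma lim_H1 a b : 0 <= a -> 1 <= b -> is_lim_seq (fun N => H (INR N + a) / (INR N + b)) 0.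
Proof.
  intros ha hb.
  apply (is_lim_seq_le_le (fun _ => 0) _ (fun N => / (INR N + b) + H (INR N + a) ^ 2 / (INR N + b))).
  - intro N. pose proof (pos_INR N) as hN. assert (h0 : 0 <= H (INR N + a)) by (apply H_nonneg; lra).
    assert (hx8 : 0 < / (INR N + b)) by (apply Rinv_0_lt_compat; lra).
    split. unfold Rdiv; apply Rmult_le_pos; lra.
    unfold Rdiv. assert (hx9 : H (INR N + a) <= 1 + H (INR N + a) ^ 2) by nra. nra.
  - apply is_lim_seq_const.
  - replace 0 with (0 + 0) by ring. apply is_lim_seq_plus'. apply lim_inv_n; lra. apply lim_H2; auto.
Qed.

Lemma lim_Hm2 a b : 0 <= a -> 1 <= b -> is_lim_seq (fun N => Hm 2 (INR N + a) / (INR N + b)) 0.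
Proof.
  intros ha hb. apply (lim_bound _ 2 b); [lra|]. intro N. pose proof (pos_INR N) as hN.
  assert (hx10 : 0 <= Hm 2 (INR N + a)) by (apply Hm_nonneg; lra || lia).
  pose proof (Hm2_le (INR N + a) ltac:(lra)).
  assert (hx11 : 0 < / (INR N + b)) by (apply Rinv_0_lt_compat; lra).
  rewrite Rabs_pos_eq; unfold Rdiv; [|apply Rmult_le_pos; lra].
  apply Rmult_le_compat_r; lra.
Qed.

Lemma hs_nonneg N : 0 <= hs N.
Proof. unfold hs. apply sum1_nonneg. intros i hi. pose proof (INR_ge1 i ltac:(lia)) as h. left; apply Rinv_0_lt_compat; lra. Qed.

Lemma hs_S N : hs (S N) = hs N + / INR (S N).
Proof. reflexivity. Qed.

Lemma hsq_id N : sum1 N (fun p => hs p / (INR p * (INR p + 1))) + hs N / (INR N + 1)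
                 = sum1 N (fun p => / INR p ^ 2).
Proof.
  induction N.
  - unfold hs; simpl. field.
  - rewrite !sum1_S. rewrite <- IHN. rewrite hs_S. pose proof (INR_S_pos N) as h.
    replace (INR N + 1) with (INR (S N)) by (rewrite S_INR; reflexivity). field. lra.
Qed.

Lemma hsq_bound N : sum1 N (fun p => hs p / INR p ^ 2) <= 4.
Proof.
  apply Rle_trans with (2 * sum1 N (fun p => hs p / (INR p * (INR p + 1)))).
  - rewrite <- sum1_scal. apply sum1_le. intros i hi. pose proof (INR_ge1 i ltac:(lia)) as h.
    pose proof (hs_nonneg i) as h2. unfold Rdiv.
    replace (2 * (hs i * / (INR i * (INR i + 1)))) with (hs i * (2 * / (INR i * (INR i + 1)))) by ring.
    apply Rmult_le_compat_l; auto.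
    replace (2 * / (INR i * (INR i + 1))) with (/ (INR i * (INR i + 1) / 2)) by (field; lra).
    apply Rinv_le_contravar. apply Rdiv_lt_0_compat; [apply Rmult_lt_0_compat|]; lra. simpl. nra.
  - pose proof (hsq_id N) as E. pose proof (inv_sq_sum2 N) as E2.
    assert (h : 0 <= hs N / (INR N + 1)). { pose proof (hs_nonneg N). pose proof (pos_INR N) as hN. unfold Rdiv; apply Rmult_le_pos; [lra| left; apply Rinv_0_lt_compat; lra]. }
    lra.
Qed.

Definition aw x (p : nat) := / INR p - / (INR p + x).
Definition Psiterm x p := H (INR p + x) * aw x p.

Lemma aw_bounds x p : 0 <= x -> (1 <= p)%nat -> 0 <= aw x p <= x * / INR p ^ 2.
Proof.
  intros hx hp. pose proof (INR_ge1 p hp) as h. unfold aw.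
  replace (/ INR p - / (INR p + x)) with (x / (INR p * (INR p + x))) by (field; lra).
  split. unfold Rdiv; apply Rmult_le_pos; auto; left; apply Rinv_0_lt_compat; apply Rmult_lt_0_compat; lra.
  unfold Rdiv. apply Rmult_le_compat_l; auto. apply Rinv_le_contravar. simpl; nra.
  simpl. rewrite Rmult_1_r. apply Rmult_le_compat_l; lra.
Qed.

Lemma aw_Hterm x p : Hterm 1 x p = aw x p.
Proof. unfold Hterm, aw. simpl. rewrite !Rmult_1_r. reflexivity. Qed.

Lemma Psi_conv x : 0 <= x -> exists l, ser (Psiterm x) l.
Proof.
  intro hx.
  destruct (ser_pos_bound (fun p => match p with O => 0 | _ => Psiterm x p end) (H x * H x + x * 4)) as [l Hl].
  - intros [|p]; [lra|]. unfold Psiterm. apply Rmult_le_pos. apply H_nonneg. pose proof (pos_INR (S p)); lra.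
    apply aw_bounds; auto; lia.
  - intro N. apply Rle_trans with (sum1 N (fun p => H x * aw x p + x * (hs p / INR p ^ 2))).
    + apply sum1_le. intros [|i] hi; [lia|]. unfold Psiterm.
      pose proof (H_le_hs x (S i) hx) as h1. pose proof (aw_bounds x (S i) hx ltac:(lia)) as [h2 h3].
      pose proof (hs_nonneg (S i)) as h4.
      apply Rle_trans with ((H x + hs (S i)) * aw x (S i)). apply Rmult_le_compat_r; auto.
      rewrite Rmult_plus_distr_r. apply Rplus_le_compat_l.
      apply Rle_trans with (hs (S i) * (x * / INR (S i) ^ 2)). apply Rmult_le_compat_l; auto.
      unfold Rdiv; right; ring.
    + rewrite sum1_plus, !sum1_scal. apply Rplus_le_compat.
      * apply Rmult_le_compat_l. apply H_nonneg; auto.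
        unfold H. erewrite sum1_ext. apply ser_le_lim. 2: apply (Hm_ser 1 x hx ltac:(lia)).
        intros n hn. apply Hterm_bounds; auto; lia.
        intros; symmetry; apply aw_Hterm.
      * apply Rmult_le_compat_l; auto. apply hsq_bound.
  - exists l. eapply ser_ext; [|exact Hl]. intros [|n] hn; [lia|reflexivity].
Qed.

Definition Psi x := lim_seq (fun N => sum1 N (Psiterm x)).

Lemma Psi_ser x : 0 <= x -> ser (Psiterm x) (Psi x).
Proof.
  intro hx. destruct (Psi_conv x hx) as [l Hl]. unfold Psi. rewrite (lim_seq_spec _ l); auto.
Qed.

Lemma ser_tele g (l : R) : is_lim_seq g l -> ser (fun n => g (pred n) - g n) (g 0%nat - l).
Proof.
  intro A. unfold ser. eapply is_lim_seq_ext; [intro N; symmetry; apply sum1_tele|].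
  apply is_lim_seq_minus'; [apply is_lim_seq_const| exact A].
Qed.

Lemma Psi_shift x : 0 <= x -> Psi (x + 1) = Psi x + 2 * H (x + 1) / (x + 1).
Proof.
  intro hx.
  set (g := fun m : nat => H (INR m + (x + 1)) / (INR m + (x + 1))).
  assert (T : ser (fun n => g (pred n) - g n) (g 0%nat - 0)).
  { apply ser_tele. apply lim_H1; lra. }
  pose proof (ser_plus _ _ _ _ (ser_plus _ _ _ _ (Psi_ser x hx) (ser_C1 (x+1) ltac:(lra))) T) as S.
  apply (ser_unique (Psiterm (x+1))). apply Psi_ser; lra.
  replace (Psi x + 2 * H (x + 1) / (x + 1)) with (Psi x + H (x + 1) / (x + 1) + (g 0%nat - 0))
    by (unfold g; simpl INR; rewrite Rplus_0_l; field; lra).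
  eapply ser_ext; [|exact S]. intros [|n] hn; [lia|].
  unfold Psiterm, aw, g. simpl pred. rewrite S_INR.
  pose proof (pos_INR n) as hN.
  replace (INR n + 1 + (x + 1)) with ((INR n + 1 + x) + 1) by ring.
  rewrite (H_shift1 (INR n + 1 + x)) by lra.
  replace (INR n + (x + 1)) with (INR n + 1 + x) by ring.
  field. lra.
Qed.

Definition Phi x := Psi x - H x ^ 2 - Hm 2 x.

Lemma Phi_shift x : 0 <= x -> Phi (x + 1) = Phi x.
Proof.
  intro hx. unfold Phi. rewrite Psi_shift, H_shift1, Hm_shift1; auto. field. lra.
Qed.

Lemma Phi_nat c n : 0 <= c -> Phi (c + INR n) = Phi c.
Proof.
  intro hc. induction n. simpl; rewrite Rplus_0_r; auto.
  rewrite S_INR. replace (c + (INR n + 1)) with ((c + INR n) + 1) by ring.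
  rewrite Phi_shift; auto. pose proof (pos_INR n); lra.
Qed.

Lemma Phi_0 : Phi 0 = 0.
Proof.
  unfold Phi. rewrite H_zero, Hm_zero.
  assert (E : Psi 0 = 0).
  { apply (ser_unique (Psiterm 0)). apply Psi_ser; lra.
    eapply ser_ext; [|apply ser_zero]. intros n hn. unfold Psiterm, aw. rewrite Rplus_0_r. ring. }
  rewrite E. ring.
Qed.

Definition phi x p := Psiterm x p - H x * Hterm 1 x p - Hterm 2 x p.

Lemma phi_ser x : 0 <= x -> ser (phi x) (Phi x).
Proof.
  intro hx. unfold Phi.
  pose proof (ser_minus _ _ _ _ (ser_minus _ _ _ _ (Psi_ser x hx) (ser_scal (H x) _ _ (Hm_ser 1 x hx ltac:(lia))))
     (Hm_ser 2 x hx ltac:(lia))) as S.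
  unfold H at 2 in S. replace (H x ^ 2) with (H x * H x) by ring. exact S.
Qed.

Definition Asum x q := sum1 q (fun m => / (INR m + x)).

Lemma phi_form x p : 0 <= x -> (1 <= p)%nat -> phi x p = aw x p * (Asum x (pred p) - / INR p).
Proof.
  intros hx hp. destruct p as [|q]; [lia|]. simpl pred.
  unfold phi, Psiterm. rewrite aw_Hterm. rewrite Rplus_comm, H_shift; auto.
  rewrite sum1_S. unfold Hterm, aw, Asum. pose proof (INR_S_pos q) as h.
  replace (sum1 q (fun i => / (x + INR i))) with (sum1 q (fun m => / (INR m + x)))
    by (apply sum1_ext; intros; rewrite Rplus_comm; auto).
  rewrite Rplus_comm. field. lra.
Qed.

Lemma Asum_bounds x q : 0 <= x -> 0 <= Asum x q <= hs q.
Proof.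
  intro hx. unfold Asum, hs. split.
  - apply sum1_nonneg. intros i hi. pose proof (INR_ge1 i ltac:(lia)). left; apply Rinv_0_lt_compat; lra.
  - apply sum1_le. intros i hi. pose proof (INR_ge1 i ltac:(lia)). apply Rinv_le_contravar; lra.
Qed.

Lemma sq_tele v q : 0 < v -> sum1 q (fun m => / (INR m + v) ^ 2) <= / v - / (INR q + v).
Proof.
  intro hv. induction q.
  - simpl. rewrite Rplus_0_l. lra.
  - rewrite sum1_S, S_INR. pose proof (pos_INR q) as hq.
    assert (hh : / (INR q + 1 + v) ^ 2 <= / (INR q + v) - / (INR q + 1 + v)).
    { replace (/ (INR q + v) - / (INR q + 1 + v)) with (/ ((INR q + v) * (INR q + 1 + v))) by (field; lra).
      apply Rinv_le_contravar. apply Rmult_lt_0_compat; lra.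
      replace ((INR q + 1 + v) ^ 2) with ((INR q + 1 + v) * (INR q + 1 + v)) by ring.
      apply Rmult_le_compat_r; lra. }
    lra.
Qed.

Lemma Asum_diff c v q : 0 <= c -> 0 < v -> 0 <= Asum v q - Asum (c + v) q <= c / v.
Proof.
  intros hc hv. unfold Asum. rewrite <- sum1_minus. split.
  - apply sum1_nonneg. intros i hi. pose proof (pos_INR i) as h. assert (/ (INR i + (c + v)) <= / (INR i + v)) by (apply Rinv_le_contravar; lra). lra.
  - apply Rle_trans with (c * sum1 q (fun m => / (INR m + v) ^ 2)).
    + rewrite <- sum1_scal. apply sum1_le. intros i hi. pose proof (pos_INR i) as h.
      replace (/ (INR i + v) - / (INR i + (c + v))) with (c / ((INR i + v) * (INR i + (c + v)))) by (field; lra).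
      unfold Rdiv. apply Rmult_le_compat_l; auto. apply Rinv_le_contravar. apply Rmult_lt_0_compat; lra.
      replace ((INR i + v) ^ 2) with ((INR i + v) * (INR i + v)) by ring. apply Rmult_le_compat_l; lra.
    + pose proof (sq_tele v q hv) as h. pose proof (pos_INR q) as hq.
      assert (0 < / (INR q + v)) by (apply Rinv_0_lt_compat; lra).
      unfold Rdiv. apply Rmult_le_compat_l; lra.
Qed.

Lemma phi_diff_bound c v p : 0 <= c -> 1 <= v -> (1 <= p)%nat ->
  Rabs (phi (c + v) p - phi v p) <= c * (hs p + 1) / (INR p * (INR p + v)).
Proof.
  intros hc hv hp. rewrite !phi_form; try lra; auto.
  pose proof (INR_ge1 p hp) as h.
  set (A1 := Asum (c + v) (pred p)). set (A0 := Asum v (pred p)).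
  assert (hA1 := Asum_bounds (c + v) (pred p) ltac:(lra)).
  assert (hA0 := Asum_bounds v (pred p) ltac:(lra)).
  assert (hD := Asum_diff c v (pred p) hc ltac:(lra)). fold A1 A0 in hA1, hA0, hD.
  assert (hhs : hs (pred p) <= hs p /\ / INR p <= hs p).
  { destruct p as [|q]; [lia|]. simpl pred. rewrite hs_S. pose proof (hs_nonneg q).
    assert (0 < / INR (S q)) by (apply Rinv_0_lt_compat; lra). lra. }
  unfold aw.
  replace (/ INR p - / (INR p + (c + v))) with ((/ INR p - / (INR p + v)) + c / ((INR p + v) * (INR p + c + v)))
    by (field; lra).
  set (w := / INR p - / (INR p + v)).
  set (e := c / ((INR p + v) * (INR p + c + v))).
  assert (hw : w = v / (INR p * (INR p + v))) by (unfold w; field; lra).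
  assert (he0 : 0 <= e) by (unfold e; apply Rmult_le_pos; auto; left; apply Rinv_0_lt_compat; apply Rmult_lt_0_compat; lra).
  assert (he1 : e <= c / (INR p * (INR p + v))).
  { unfold e, Rdiv. apply Rmult_le_compat_l; auto. apply Rinv_le_contravar. apply Rmult_lt_0_compat; lra.
    rewrite (Rmult_comm (INR p + v) (INR p + c + v)). apply Rmult_le_compat_r; lra. }
  replace ((w + e) * (A1 - / INR p) - w * (A0 - / INR p)) with (e * (A1 - / INR p) - w * (A0 - A1)) by ring.
  assert (hinv : 0 < / INR p) by (apply Rinv_0_lt_compat; lra).
  assert (k1 : Rabs (A1 - / INR p) <= hs p) by (apply Rabs_le; lra).
  assert (hw0 : 0 <= w) by (rewrite hw; unfold Rdiv; apply Rmult_le_pos; [lra| left; apply Rinv_0_lt_compat; apply Rmult_lt_0_compat; lra]).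
  eapply Rle_trans; [apply Rabs_triang|]. rewrite Rabs_Ropp, !Rabs_mult.
  rewrite (Rabs_pos_eq e he0), (Rabs_pos_eq w hw0), (Rabs_pos_eq (A0 - A1)) by lra.
  apply Rle_trans with (c / (INR p * (INR p + v)) * hs p + w * (c / v)).
  - apply Rplus_le_compat. apply Rmult_le_compat; auto. apply Rabs_pos. apply Rmult_le_compat_l; lra.
  - rewrite hw. right. field. lra.
Qed.

Lemma sum1_tail_bound f d P M : (forall i, Rabs (f i) <= d i) -> (P <= M)%nat ->
  Rabs (sum1 M f - sum1 P f) <= sum1 M d - sum1 P d.
Proof.
  intros hd hPM. induction hPM.
  - rewrite !Rminus_diag, Rabs_R0. lra.
  - rewrite !sum1_S. replace (sum1 m f + f (S m) - sum1 P f) with ((sum1 m f - sum1 P f) + f (S m)) by ring.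
    eapply Rle_trans; [apply Rabs_triang|]. specialize (hd (S m)). lra.
Qed.

Lemma lim_abs_le u (l : R) r P : is_lim_seq u l -> (forall M, (P <= M)%nat -> Rabs (u M) <= r) -> Rabs l <= r.
Proof.
  intros A B.
  assert (R : Rbar_le (Rabs l) r).
  { apply (is_lim_seq_le (fun M => Rabs (u (M + P)%nat)) (fun _ => r)).
    - intro M. apply B. lia.
    - apply (is_lim_seq_abs _ l). apply (is_lim_seq_incr_n u P) in A. exact A.
    - apply is_lim_seq_const. }
  exact R.
Qed.

Lemma lim_sum1_fin P (g : nat -> nat -> R) : (forall p, is_lim_seq (fun n => g n p) 0) ->
  is_lim_seq (fun n => sum1 P (g n)) 0.
Proof.
  intro A. induction P.
  - simpl. apply is_lim_seq_const.
  - replace 0 with (0 + 0) by ring. apply is_lim_seq_plus'; auto.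
Qed.

Lemma dct (g : nat -> nat -> R) (d : nat -> R) (L : nat -> R) B :
  (forall n p, Rabs (g n p) <= d p) -> (forall N, sum1 N d <= B) ->
  (forall p, is_lim_seq (fun n => g n p) 0) -> (forall n, ser (g n) (L n)) -> is_lim_seq L 0.
Proof.
  intros hd hB hlim hL.
  assert (dpos : forall p, 0 <= d p) by (intro p; eapply Rle_trans; [apply Rabs_pos| apply (hd 0%nat p)]).
  destruct (ser_pos_bound d B dpos hB) as [D HD]. assert (HDs := HD).
  apply is_lim_seq_spec. intro eps.
  assert (he : 0 < eps / 2) by (destruct eps; simpl; lra).
  apply is_lim_seq_spec in HD. destruct (HD (mkposreal _ he)) as [P HP]. simpl in HP.
  specialize (HP P (le_n P)).
  pose proof (lim_sum1_fin P g hlim) as F. apply is_lim_seq_spec in F.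
  destruct (F (mkposreal _ he)) as [N0 HN0]. simpl in HN0.
  exists N0. intros n hn. specialize (HN0 n hn). rewrite Rminus_0_r in *.
  assert (T : Rabs (L n - sum1 P (g n)) <= D - sum1 P d).
  { apply (lim_abs_le (fun M => sum1 M (g n) - sum1 P (g n)) _ _ P).
    - apply is_lim_seq_minus'; [apply hL| apply is_lim_seq_const].
    - intros M hM. eapply Rle_trans; [apply sum1_tail_bound; eauto|].
      pose proof (ser_le_lim d D M (fun n _ => dpos n) HDs). lra. }
  rewrite Rabs_minus_sym in HP.
  pose proof (ser_le_lim d D P (fun n _ => dpos n) HDs).
  replace (L n) with ((L n - sum1 P (g n)) + sum1 P (g n)) by ring.
  eapply Rle_lt_trans; [apply Rabs_triang|].
  rewrite Rabs_pos_eq in HP by lra. lra.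
Qed.

Lemma Phi_zero c : 0 <= c -> Phi c = 0.
Proof.
  intro hc.
  set (g := fun n p => match p with O => 0 | _ => phi (c + INR (S n)) p - phi (INR (S n)) p end).
  set (d := fun p => match p with O => 0 | _ => c * (hs p + 1) / INR p ^ 2 end).
  assert (Hb : forall n p, (1 <= p)%nat -> Rabs (g n p) <= c * (hs p + 1) / (INR p * (INR p + INR (S n)))).
  { intros n [|p] hp; [lia|]. unfold g. apply phi_diff_bound; auto. apply INR_ge1; lia. }
  assert (Hd : forall n p, Rabs (g n p) <= d p).
  { intros n [|p]. unfold g, d; rewrite Rabs_R0; lra.
    eapply Rle_trans; [apply Hb; lia|]. unfold d. pose proof (INR_S_pos p) as h1. pose proof (INR_S_pos n) as h2.
    pose proof (hs_nonneg (S p)) as h3. unfold Rdiv. apply Rmult_le_compat_l. apply Rmult_le_pos; lra.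
    apply Rinv_le_contravar. apply pow_lt; lra. replace (INR (S p) ^ 2) with (INR (S p) * INR (S p)) by ring. apply Rmult_le_compat_l; lra. }
  assert (HB : forall N, sum1 N d <= c * 4 + c * 2).
  { intro N. apply Rle_trans with (sum1 N (fun p => c * (hs p / INR p ^ 2) + c * / INR p ^ 2)).
    - apply sum1_le. intros [|i] hi; [lia|]. unfold d. right. unfold Rdiv. ring.
    - rewrite sum1_plus, !sum1_scal. apply Rplus_le_compat; apply Rmult_le_compat_l; auto.
      apply hsq_bound. apply inv_sq_sum2. }
  assert (Hl : forall p, is_lim_seq (fun n => g n p) 0).
  { intros [|p]. unfold g. apply is_lim_seq_const.
    apply (lim_bound _ (c * (hs (S p) + 1) / INR (S p)) 1); [lra|]. intro n.
    eapply Rle_trans; [apply Hb; lia|]. pose proof (INR_S_pos p) as h1. pose proof (pos_INR n) as h2.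
    pose proof (hs_nonneg (S p)) as h3. rewrite (S_INR n).
    replace (c * (hs (S p) + 1) / INR (S p) * / (INR n + 1)) with (c * (hs (S p) + 1) / (INR (S p) * (INR n + 1))) by (field; lra).
    unfold Rdiv. apply Rmult_le_compat_l. apply Rmult_le_pos; lra.
    apply Rinv_le_contravar. apply Rmult_lt_0_compat; lra.
    apply Rmult_le_compat_l; lra. }
  assert (HL : forall n, ser (g n) (Phi c - 0)).
  { intro n. pose proof (ser_minus _ _ _ _ (phi_ser (c + INR (S n)) ltac:(pose proof (pos_INR (S n)); lra))
                                          (phi_ser (INR (S n)) ltac:(apply pos_INR))) as Sx.
    rewrite Phi_nat in Sx; auto.
    assert (E : Phi (INR (S n)) = 0) by (replace (INR (S n)) with (0 + INR (S n)) by ring; rewrite Phi_nat, Phi_0; lra).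
    rewrite E in Sx.
    eapply ser_ext; [|exact Sx]. intros [|p] hp; [lia|]. unfold g. reflexivity. }
  pose proof (dct g d (fun _ => Phi c - 0) _ Hd HB Hl HL) as Z.
  apply is_lim_seq_unique in Z. rewrite Lim_seq_const in Z. injection Z. lra.
Qed.

Lemma Psi_val c : 0 <= c -> Psi c = H c ^ 2 + Hm 2 c.
Proof. intro hc. pose proof (Phi_zero c hc) as E. unfold Phi in E. lra. Qed.

Lemma ser_V a : 0 < a -> ser (fun n => H (INR n + a) / (INR n * (INR n + a))) ((H a ^ 2 + Hm 2 a) / a).
Proof.
  intro ha. pose proof (ser_scal (/a) _ _ (Psi_ser a ltac:(lra))) as S. rewrite Psi_val in S; [|lra].
  replace ((H a ^ 2 + Hm 2 a) / a) with (/ a * (H a ^ 2 + Hm 2 a)) by (unfold Rdiv; ring).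
  eapply ser_ext; [|exact S]. intros n hn. pose proof (INR_ge1 n hn) as h. unfold Psiterm, aw.
  field. lra.
Qed.

Definition Sterm (f : R -> R) a j n := f (INR n + a) * (/ INR n - / (INR n + INR j)).

Lemma T_step f a j L0 L1 :
  ser (Sterm f (a - 1) j) L0 ->
  ser (fun n => (f (INR n + a) - f (INR n + a - 1)) / INR n) L1 ->
  is_lim_seq (fun N => f (INR N + a) / (INR N + (INR j + 1))) 0 ->
  ser (Sterm f a (S j)) (L0 + L1 + f a / (INR j + 1)).
Proof.
  intros S0 S1 Lm.
  set (g := fun m : nat => f (INR m + a) / (INR m + (INR j + 1))).
  pose proof (ser_plus _ _ _ _ (ser_plus _ _ _ _ S0 S1) (ser_tele g 0 Lm)) as Sx.
  replace (f a / (INR j + 1)) with (g 0%nat - 0) by (unfold g; simpl INR; rewrite !Rplus_0_l; ring).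
  eapply ser_ext; [|exact Sx]. intros [|m] hm; [lia|]. unfold Sterm, g. simpl pred.
  pose proof (pos_INR m) as h0. pose proof (pos_INR j) as h1.
  rewrite !S_INR.
  replace (INR m + 1 + (a - 1)) with (INR m + a) by ring.
  replace (INR m + 1 + a - 1) with (INR m + a) by ring.
  field. lra.
Qed.

Lemma sum_shift_lemma (F : R -> nat -> R) a j :
  sum1 (S j) (fun i => F (a + INR i - INR (S j)) i) = sum1 j (fun i => F (a - 1 + INR i - INR j) i) + F a (S j).
Proof.
  rewrite sum1_S. f_equal.
  - apply sum1_ext. intros i hi. f_equal. rewrite S_INR. ring.
  - f_equal. ring.
Qed.

Definition B1 alpha j :=
  H alpha ^ 2 + Hm 2 alpha - H (alpha - INR j) ^ 2 - Hm 2 (alpha - INR j)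
         - (INR j - alpha) *
             sum1 j (fun i => H (alpha + INR i - INR j) / (INR i * (alpha + INR i - INR j))).

Lemma B1_step a j : INR (S j) < a -> B1 a (S j) = B1 (a - 1) j + H a / a + H a / (INR j + 1).
Proof.
  intro ha. rewrite S_INR in ha. pose proof (pos_INR j) as hj.
  unfold B1.
  rewrite (sum_shift_lemma (fun x i => H x / (INR i * x))).
  replace (a - INR (S j)) with (a - 1 - INR j) by (rewrite S_INR; ring).
  rewrite (H_down a), (Hm_down 2 a) by (lra || lia).
  rewrite S_INR. field. lra.
Qed.

Lemma Sterm_zero f a : forall n, (1 <= n)%nat -> 0 = Sterm f a 0 n.
Proof. intros n hn. unfold Sterm. simpl INR. rewrite Rplus_0_r. ring. Qed.

Lemma F1 : forall j a, INR j < a -> ser (Sterm H a j) (B1 a j).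
Proof.
  induction j; intros a ha.
  - replace (B1 a 0) with 0. eapply ser_ext; [apply Sterm_zero| apply ser_zero].
    unfold B1. simpl. replace (a - 0) with a by ring. ring.
  - rewrite B1_step; auto. rewrite S_INR in ha. pose proof (pos_INR j) as hj.
    apply T_step.
    + apply IHj. lra.
    + eapply ser_ext; [|apply (ser_C1 a); lra]. intros n hn. pose proof (INR_ge1 n hn) as h.
      replace (INR n + a - 1) with ((INR n + a) - 1) by ring. rewrite (H_down (INR n + a)) by lra.
      field. lra.
    + apply lim_H1; lra.
Qed.

Definition B2 alpha j :=
  2 * Hm 3 alpha + H (alpha - INR j) * zeta 2 + 2 * H alpha * Hm 2 alpha
         - 2 * Hm 3 (alpha - INR j) - H alpha * zeta 2
         - 2 * H (alpha - INR j) * Hm 2 (alpha - INR j)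
         - (INR j - alpha) *
             sum1 j (fun i => Hm 2 (alpha + INR i - INR j) / (INR i * (alpha + INR i - INR j)))
         - sum1 j (fun i => H (alpha + INR i - INR j) / (alpha + INR i - INR j) ^ 2).

Lemma B2_step a j : INR (S j) < a ->
  B2 a (S j) = B2 (a - 1) j + (H a / a - (zeta 2 - Hm 2 a)) / a + Hm 2 a / (INR j + 1).
Proof.
  intro ha. rewrite S_INR in ha. pose proof (pos_INR j) as hj.
  unfold B2.
  rewrite (sum_shift_lemma (fun x i => Hm 2 x / (INR i * x))).
  rewrite (sum_shift_lemma (fun x i => H x / x ^ 2)).
  replace (a - INR (S j)) with (a - 1 - INR j) by (rewrite S_INR; ring).
  rewrite (H_down a), (Hm_down 2 a), (Hm_down 3 a) by (lra || lia).
  rewrite S_INR. field. lra.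
Qed.

Lemma F2 : forall j a, INR j < a -> ser (Sterm (fun x => Hm 2 x) a j) (B2 a j).
Proof.
  induction j; intros a ha.
  - replace (B2 a 0) with 0. eapply ser_ext; [apply Sterm_zero| apply ser_zero].
    unfold B2. simpl. replace (a - 0) with a by ring. ring.
  - rewrite B2_step; auto. rewrite S_INR in ha. pose proof (pos_INR j) as hj.
    apply T_step.
    + apply IHj. lra.
    + eapply ser_ext; [|apply (ser_C3 a); lra]. intros n hn. pose proof (INR_ge1 n hn) as h.
      replace (INR n + a - 1) with ((INR n + a) - 1) by ring. rewrite (Hm_down 2 (INR n + a)) by (lra || lia).
      field. lra.
    + apply lim_Hm2; lra.
Qed.

Definition B3 alpha j :=
  H alpha ^ 3 + H alpha * Hm 2 alpha + H alpha * zeta 2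
         - H (alpha - INR j) ^ 3 - H (alpha - INR j) * Hm 2 (alpha - INR j)
         - H (alpha - INR j) * zeta 2
         + sum1 j (fun i => H (alpha + INR i - INR j) / (alpha + INR i - INR j) ^ 2)
         - (INR j - alpha) *
             sum1 j (fun i => H (alpha + INR i - INR j) ^ 2 / (INR i * (alpha + INR i - INR j))).

Lemma B3_step a j : INR (S j) < a ->
  B3 a (S j) = B3 (a - 1) j + (2 * ((H a ^ 2 + Hm 2 a) / a) - (H a / a - (zeta 2 - Hm 2 a)) / a)
               + H a ^ 2 / (INR j + 1).
Proof.
  intro ha. rewrite S_INR in ha. pose proof (pos_INR j) as hj.
  unfold B3.
  rewrite (sum_shift_lemma (fun x i => H x / x ^ 2)).
  rewrite (sum_shift_lemma (fun x i => H x ^ 2 / (INR i * x))).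
  replace (a - INR (S j)) with (a - 1 - INR j) by (rewrite S_INR; ring).
  rewrite (H_down a), (Hm_down 2 a) by (lra || lia).
  rewrite S_INR. field. lra.
Qed.

Lemma F3 : forall j a, INR j < a -> ser (Sterm (fun x => H x ^ 2) a j) (B3 a j).
Proof.
  induction j; intros a ha.
  - replace (B3 a 0) with 0. eapply ser_ext; [apply Sterm_zero| apply ser_zero].
    unfold B3. simpl. replace (a - 0) with a by ring. ring.
  - rewrite B3_step; auto. rewrite S_INR in ha. pose proof (pos_INR j) as hj.
    apply T_step.
    + apply IHj. lra.
    + eapply ser_ext; [|apply (ser_minus _ _ _ _ (ser_scal 2 _ _ (ser_V a ltac:(lra))) (ser_C3 a ltac:(lra)))].
      intros n hn. pose proof (INR_ge1 n hn) as h.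
      replace (INR n + a - 1) with ((INR n + a) - 1) by ring. rewrite (H_down (INR n + a)) by lra.
      field. lra.
    + apply lim_H2; lra.
Qed.

Lemma C_n0 n : C n 0 = 1.
Proof. unfold C. rewrite Nat.sub_0_r. simpl fact. simpl INR. field. apply INR_fact_neq_0. Qed.
Lemma C_nn n : C n n = 1.
Proof. unfold C. rewrite Nat.sub_diag. simpl fact. simpl INR. field. apply INR_fact_neq_0. Qed.

Lemma pascal_A k g :
  sum1 (S k) (fun j => (-1) ^ (j + 1) * C (S k) j * g j) =
  sum1 k (fun j => (-1) ^ (j + 1) * C k j * g j) + g 1%nat
  - sum1 k (fun j => (-1) ^ (j + 1) * C k j * g (S j)).
Proof.
  rewrite sum1_S.
  rewrite (sum1_ext k (fun j => (-1) ^ (j + 1) * C (S k) j * g j)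
            (fun j => (-1) ^ (j + 1) * C k j * g j + (-1) ^ (j + 1) * C k (pred j) * g j)).
  2: { intros [|i] hi; [lia|]. simpl pred. rewrite <- (pascal k i) by lia. ring. }
  rewrite sum1_plus.
  assert (E : sum1 k (fun j => (-1) ^ (j + 1) * C k (pred j) * g j) + (-1) ^ (S k + 1) * C (S k) (S k) * g (S k)
              = sum1 (S k) (fun j => (-1) ^ (j + 1) * C k (pred j) * g j)).
  { rewrite sum1_S. simpl pred. rewrite !C_nn. reflexivity. }
  rewrite Rplus_assoc, E. rewrite sum1_shift. simpl pred. rewrite C_n0.
  rewrite (sum1_ext k (fun i => (-1) ^ (S i + 1) * C k i * g (S i)) (fun i => - ((-1) ^ (i + 1) * C k i * g (S i)))).
  2: { intros i hi. simpl. ring. }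
  replace (sum1 k (fun i => - ((-1) ^ (i + 1) * C k i * g (S i)))) with (- sum1 k (fun i => (-1) ^ (i + 1) * C k i * g (S i))).
  2: { replace (- sum1 k (fun i => (-1) ^ (i + 1) * C k i * g (S i))) with (-1 * sum1 k (fun i => (-1) ^ (i + 1) * C k i * g (S i))) by ring. rewrite <- sum1_scal. apply sum1_ext. intros; ring. }
  simpl. ring.
Qed.

Lemma A_one k : sum1 (S k) (fun j => (-1) ^ (j + 1) * C (S k) j * 1) = 1.
Proof. rewrite pascal_A. ring. Qed.

Definition Pk k x := sum1 k (fun j => (-1) ^ (j + 1) * C k j * (/ x - / (x + INR j))).

Lemma Pk_rec k x : (1 <= k)%nat -> 0 < x -> Pk (S k) x = Pk k x - Pk k (x + 1).
Proof.
  intros hk hx. unfold Pk. rewrite pascal_A.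
  rewrite (sum1_ext k (fun j => (-1) ^ (j + 1) * C k j * (/ x - / (x + INR (S j))))
            (fun j => (/ x - / (x + 1)) * ((-1) ^ (j + 1) * C k j * 1) + (-1) ^ (j + 1) * C k j * (/ (x + 1) - / (x + 1 + INR j)))).
  2: { intros i hi. rewrite S_INR. replace (x + (INR i + 1)) with (x + 1 + INR i) by ring. ring. }
  rewrite sum1_plus, sum1_scal. destruct k as [|k]; [lia|]. rewrite A_one. change (INR 1) with 1. ring.
Qed.

Definition Qk k m := / (INR m * C (m + k) k).

Lemma fact_S_INR n : INR (fact (S n)) = INR (S n) * INR (fact n).
Proof. rewrite <- mult_INR. reflexivity. Qed.

Lemma Qk_rec k m : (1 <= m)%nat -> Qk (S k) m = Qk k m - Qk k (S m).
Proof.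
  intro hm. unfold Qk, C.
  replace (m + S k - S k)%nat with m by lia. replace (m + k - k)%nat with m by lia.
  replace (S m + k - k)%nat with (S m) by lia.
  replace (m + S k)%nat with (S (m + k)) by lia. replace (S m + k)%nat with (S (m + k)) by lia.
  rewrite !fact_S_INR. rewrite !S_INR. rewrite plus_INR.
  pose proof (INR_ge1 m hm) as h. pose proof (pos_INR k) as hk.
  pose proof (INR_fact_neq_0 k) as f1. pose proof (INR_fact_neq_0 m) as f2. pose proof (INR_fact_neq_0 (m + k)) as f3.
  field. repeat split; try lra; auto.
Qed.

Lemma PQ k m : (1 <= k)%nat -> (1 <= m)%nat -> Pk k (INR m) = Qk k m.
Proof.
  intros hk. revert m. induction hk as [|k0 hk IHhk]; intros m hm.
  - unfold Pk, Qk. simpl sum1. rewrite C_nn.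
    replace (m + 1)%nat with (S m) by lia. unfold C. replace (S m - 1)%nat with m by lia.
    rewrite fact_S_INR. simpl fact. rewrite S_INR. pose proof (INR_ge1 m hm) as h.
    pose proof (INR_fact_neq_0 m). simpl INR. field. repeat split; lra || auto.
  - rewrite Pk_rec; auto; [|pose proof (INR_ge1 m hm); lra].
    rewrite IHhk; auto. replace (INR m + 1) with (INR (S m)) by (rewrite S_INR; reflexivity).
    rewrite IHhk; [|lia]. rewrite Qk_rec; auto.
Qed.

Lemma lim_sum1_gen K (u : nat -> nat -> R) (l : nat -> R) :
  (forall j, (1 <= j <= K)%nat -> is_lim_seq (u j) (l j)) ->
  is_lim_seq (fun n => sum1 K (fun j => u j n)) (sum1 K l).
Proof.
  induction K; intro A.
  - simpl. apply is_lim_seq_const.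
  - simpl. apply is_lim_seq_plus'. apply IHK; intros; apply A; lia. apply A; lia.
Qed.

Lemma sum_f_sum1 t N : sum_f_R0 (fun n => t (S n)) N = sum1 (S N) t.
Proof. induction N. simpl; ring. simpl sum_f_R0. rewrite IHN. reflexivity. Qed.

Lemma final f alpha k (L : nat -> R) : (1 <= k)%nat -> 0 < alpha ->
  (forall j, (1 <= j <= k)%nat -> ser (Sterm f alpha j) (L j)) ->
  infinite_sum (fun n => f (INR (S n) + alpha) / (INR (S n) * C (S n + k) k))
    (sum1 k (fun j => (-1) ^ (j + 1) * C k j * L j)).
Proof.
  intros hk ha HL.
  set (t := fun m : nat => f (INR m + alpha) / (INR m * C (m + k) k)).
  assert (St : ser t (sum1 k (fun j => (-1) ^ (j + 1) * C k j * L j))).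
  { unfold ser.
    eapply is_lim_seq_ext; [|apply (lim_sum1_gen k (fun j N => sum1 N (fun m => (-1) ^ (j + 1) * C k j * Sterm f alpha j m)))].
    - intro N. simpl. rewrite <- sum1_swap. apply sum1_ext. intros m hm.
      unfold t. unfold Rdiv. fold (Qk k m). rewrite <- PQ; [|auto|lia]. unfold Pk, Sterm.
      rewrite <- sum1_scal. apply sum1_ext. intros; ring.
    - intros j hj. unfold ser in HL. eapply is_lim_seq_ext; [|apply (is_lim_seq_scal_l _ ((-1) ^ (j + 1) * C k j) _ (HL j hj))].
      intro N. simpl. rewrite sum1_scal. reflexivity. }
  apply (proj1 (is_lim_seq_Reals (fun N => sum_f_R0 (fun n => f (INR (S n) + alpha) / (INR (S n) * C (S n + k) k)) N) _)).
  apply is_lim_seq_incr_1 in St. eapply is_lim_seq_ext; [|exact St].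
  intro N. exact (eq_sym (sum_f_sum1 t N)).
Qed.

Theorem mainTheorem18 (k : nat) (alpha : R) (hk : (1 <= k)%nat) (ha : INR k < alpha) :
  infinite_sum
    (fun n => H (INR (S n) + alpha) / (INR (S n) * C (S n + k) k))
    (sum1 k (fun j => (-1) ^ (j + 1) * C k j *
       ( H alpha ^ 2 + Hm 2 alpha - H (alpha - INR j) ^ 2 - Hm 2 (alpha - INR j)
         - (INR j - alpha) *
             sum1 j (fun i => H (alpha + INR i - INR j) / (INR i * (alpha + INR i - INR j))))))
  /\
  infinite_sum
    (fun n => Hm 2 (INR (S n) + alpha) / (INR (S n) * C (S n + k) k))
    (sum1 k (fun j => (-1) ^ (j + 1) * C k j *
       ( 2 * Hm 3 alpha + H (alpha - INR j) * zeta 2 + 2 * H alpha * Hm 2 alpha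
         - 2 * Hm 3 (alpha - INR j) - H alpha * zeta 2
         - 2 * H (alpha - INR j) * Hm 2 (alpha - INR j)
         - (INR j - alpha) *
             sum1 j (fun i => Hm 2 (alpha + INR i - INR j) / (INR i * (alpha + INR i - INR j)))
         - sum1 j (fun i => H (alpha + INR i - INR j) / (alpha + INR i - INR j) ^ 2))))
  /\
  infinite_sum
    (fun n => H (INR (S n) + alpha) ^ 2 / (INR (S n) * C (S n + k) k))
    (sum1 k (fun j => (-1) ^ (j + 1) * C k j *
       ( H alpha ^ 3 + H alpha * Hm 2 alpha + H alpha * zeta 2
         - H (alpha - INR j) ^ 3 - H (alpha - INR j) * Hm 2 (alpha - INR j)
         - H (alpha - INR j) * zeta 2
         + sum1 j (fun i => H (alpha + INR i - INR j) / (alpha + INR i - INR j) ^ 2)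
         - (INR j - alpha) *
             sum1 j (fun i => H (alpha + INR i - INR j) ^ 2 / (INR i * (alpha + INR i - INR j)))))).
Proof.
  assert (h0 : 0 < alpha) by (pose proof (pos_INR k); lra).
  assert (hj : forall j, (1 <= j <= k)%nat -> INR j < alpha).
  { intros j Hj. apply Rle_lt_trans with (INR k); auto. apply le_INR; lia. }
  split; [|split].
  - exact (final H alpha k (B1 alpha) hk h0 (fun j Hj => F1 j alpha (hj j Hj))).
  - exact (final (fun x => Hm 2 x) alpha k (B2 alpha) hk h0 (fun j Hj => F2 j alpha (hj j Hj))).
  - exact (final (fun x => H x ^ 2) alpha k (B3 alpha) hk h0 (fun j Hj => F3 j alpha (hj j Hj))).
Qed.
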